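(* Let $\rho\in[-1,1]$, let $A\in\mathbb{R}^{n\times n}$ be a normalized elliptic matrix with parameter $\rho$, $\boldsymbol u^0\in\mathbb{R}^n$, $B\in\mathbb{R}^{n\times p}$, and let $h_0,h_1,\dots:\mathbb{R}^{p+1}\to\mathbb{R}$ be functions with a fixed partial derivative $\partial_1h_k$ in the first argument. Consider the iterates $\boldsymbol u^{k+1}=A\boldsymbol q^k-\rho d_k\boldsymbol q^{k-1}$, $k\ge0$, with the notation of the context. Then $\boldsymbol u^1=A\boldsymbol q^0=\mathcal I_0(A)$ and for every $k\ge1$, $$\boldsymbol u^{k+1}=\sum_{\ell=1}^k\alpha^k_\ell\boldsymbol u^\ell+\rho\,Q_k(Q_k^\top Q_k)^\dagger\Big(\boldsymbol v^{k,k}-\sum_{\ell=1}^k\alpha^k_\ell\boldsymbol v^{k,\ell-1}\Big)+\mathcal I_k(A).$$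
   Context: $\mathrm{Elliptic}(n,\rho)$: $M_{ii}\sim\mathcal N(0,1+\rho)$, for $i<j$ $(M_{ij},M_{ji})$ centered Gaussian with variances 1 and covariance $\rho$, all independent across $\{M_{ii}\}\cup\{(M_{ij},M_{ji})\}_{i<j}$; $A$ normalized elliptic means $\sqrt nA\sim\mathrm{Elliptic}(n,\rho)$. For $h:\mathbb{R}^{p+1}\to\mathbb{R}$, $h(\boldsymbol u,B)=(h(u_i,B_{i1},\dots,B_{ip}))_i$. Notation: $\boldsymbol q^k=h_k(\boldsymbol u^k,B)$ for $k\ge0$, $\boldsymbol q^{-1}=0$; $d_k=\frac1n\sum_i\partial_1h_k(u^k_i,B_{i,*})$ for $k\ge1$, $d_0=0$; $Q_k=[\boldsymbol q^0,\dots,\boldsymbol q^{k-1}]$, $U_k=[\boldsymbol u^1,\dots,\boldsymbol u^k]\in\mathbb{R}^{n\times k}$; $\dagger$ denotes the Moore–Penrose pseudo-inverse; $P_k=Q_k(Q_k^\top Q_k)^\dagger Q_k^\top$ (orthogonal projection on the column span of $Q_k$), $P_k^\perp=I_n-P_k$, $P_0=0$, $P_0^\perp=I_n$; $\boldsymbol\alpha^k=(\alpha^k_1,\dots,\alpha^k_k)^\top=(Q_k^\top Q_k)^\dagger Q_k^\top\boldsymbol q^k$; for $k\ge1,\ell\ge0$, $\boldsymbol v^{k,\ell}=U_k^\top\boldsymbol q^\ell-d_\ell Q_k^\top\boldsymbol q^{\ell-1}$; $\mathcal I_k(A)=(A-\rho P_kA^\top)P_k^\perp\boldsymbol q^k$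 for $k\ge0$. *)

(* Defs.v *)
From HB Require Import structures.
From mathcomp Require Import all_boot all_order all_algebra.
From Stdlib Require Import ClassicalEpsilon.
Set Implicit Arguments. Unset Strict Implicit. Unset Printing Implicit Defensive.
Import Order.TTheory GRing.Theory Num.Theory.
Local Open Scope ring_scope.

Definition is_mpinv (R : realFieldType) (m k : nat)
  (M : 'M[R]_(m, k)) (X : 'M[R]_(k, m)) : Prop :=
  [/\ M *m X *m M = M, X *m M *m X = X,
      (M *m X)^T = M *m X & (X *m M)^T = X *m M].

Definition mpinv (R : realFieldType) (m k : nat) (M : 'M[R]_(m, k)) : 'M[R]_(k, m) :=
  epsilon (inhabits 0) (is_mpinv M).

Section AMP.
Context (R : realFieldType) (n p : nat) (rho : R) (A : 'M[R]_n)
  (u0 : 'cV[R]_n) (B : 'M[R]_(n, p))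
  (h : nat -> R -> 'rV[R]_p -> R)      (* h k (u, b1..bp) *)
  (dh : nat -> R -> 'rV[R]_p -> R).    (* fixed partial derivative d_1 h_k *)

Definition applyh (f : R -> 'rV[R]_p -> R) (x : 'cV[R]_n) : 'cV[R]_n :=
  \col_i f (x i 0) (row i B).

Definition avgf (f : R -> 'rV[R]_p -> R) (x : 'cV[R]_n) : R :=
  (n%:R)^-1 * \sum_(i < n) f (x i 0) (row i B).

(* state k = (u^k, q^{k-1}), with q^{-1} = 0, d_0 = 0 *)
Fixpoint amp_state (k : nat) : 'cV[R]_n * 'cV[R]_n :=
  match k with
  | 0 => (u0, 0)
  | k'.+1 =>
      let uk := (amp_state k').1 in
      let qkm1 := (amp_state k').2 in
      let qk := applyh (h k') uk in
      let dk := if k' is 0 then 0 else avgf (dh k') uk in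
      (A *m qk - (rho * dk) *: qkm1, qk)
  end.

Definition u_ (k : nat) : 'cV[R]_n := (amp_state k).1.
Definition q_ (k : nat) : 'cV[R]_n := applyh (h k) (u_ k).
Definition qprev (k : nat) : 'cV[R]_n := if k is k'.+1 then q_ k' else 0.
Definition d_ (k : nat) : R := if k is 0 then 0 else avgf (dh k) (u_ k).

Definition Qm (k : nat) : 'M[R]_(n, k) := \matrix_(i < n, j < k) q_ j i 0.
Definition Um (k : nat) : 'M[R]_(n, k) := \matrix_(i < n, j < k) u_ j.+1 i 0.

Definition Pm (k : nat) : 'M[R]_n := Qm k *m mpinv ((Qm k)^T *m Qm k) *m (Qm k)^T.
Definition Pperp (k : nat) : 'M[R]_n := 1%:M - Pm k.

(* alpha^k = (Q_k^T Q_k)^+ Q_k^T q^k ; alpha^k_l is entry (l-1) *)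
Definition alpha (k : nat) : 'cV[R]_k :=
  mpinv ((Qm k)^T *m Qm k) *m (Qm k)^T *m q_ k.

Definition vkl (k l : nat) : 'cV[R]_k :=
  (Um k)^T *m q_ l - d_ l *: ((Qm k)^T *m qprev l).

Definition Ik (k : nat) (A' : 'M[R]_n) : 'cV[R]_n :=
  (A' - rho *: (Pm k *m A'^T)) *m Pperp k *m q_ k.

End AMP.

(* Main.v *)
From HB Require Import structures.
From mathcomp Require Import all_boot all_order all_algebra.
From Stdlib Require Import ClassicalEpsilon.
Require Import Defs.
Import Order.TTheory GRing.Theory Num.Theory.
Local Open Scope ring_scope.

Section Aux.
Variable R : realFieldType.

Lemma gram0 m k (X : 'M[R]_(m, k)) : X^T *m X = 0 -> X = 0.
Proof.
move=> H; apply/matrixP => i j.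
have := congr1 (fun M : 'M_k => M j j) H; rewrite !mxE => /eqP.
rewrite psumr_eq0 => [/allP Hall|l _]; last by rewrite mxE -expr2 sqr_ge0.
have := Hall i (mem_index_enum _); rewrite /= mxE -expr2 sqrf_eq0 => /eqP ->.
by rewrite ?mxE.
Qed.

Lemma unit_gram r m (F : 'M[R]_(r, m)) : row_free F -> F *m F^T \in unitmx.
Proof.
move=> fF; rewrite -row_free_unit -kermx_eq0; apply/rowV0P => v /sub_kermxP Hv.
have H1 : (v *m F)^T^T *m (v *m F)^T = 0.
  by rewrite trmxK trmx_mul !mulmxA -(mulmxA v) Hv mul0mx.
have H2 := gram0 _ _ _ H1.
have : v *m F = 0 *m F by rewrite mul0mx -[v *m F]trmxK H2 trmx0.
by move/(row_free_inj fF).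
Qed.

Lemma mp_factor m r k (C : 'M[R]_(m, r)) (F : 'M[R]_(r, k)) :
  C^T *m C \in unitmx -> F *m F^T \in unitmx -> exists X, is_mpinv (C *m F) X.
Proof.
move=> uC uF.
set iF := invmx (F *m F^T); set iC := invmx (C^T *m C).
have sF : iF^T = iF by rewrite /iF trmx_inv trmx_mul trmxK.
have sC : iC^T = iC by rewrite /iC trmx_inv trmx_mul trmxK.
exists (F^T *m iF *m iC *m C^T).
have MX : C *m F *m (F^T *m iF *m iC *m C^T) = C *m iC *m C^T.
  by rewrite !mulmxA -(mulmxA C F) -(mulmxA C (F *m F^T)) mulmxV // mulmx1.
have XM : (F^T *m iF *m iC *m C^T) *m (C *m F) = F^T *m iF *m F.
  by rewrite !mulmxA -(mulmxA _ C^T C) -(mulmxA (F^T *m iF) iC) mulVmx // mulmx1.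
split.
- by rewrite MX !mulmxA -(mulmxA _ C^T C) -(mulmxA C iC) mulVmx // mulmx1.
- by rewrite XM !mulmxA -(mulmxA _ F F^T) -(mulmxA (F^T *m iF) (F *m F^T)) mulmxV // mulmx1.
- by rewrite MX !trmx_mul trmxK sC mulmxA.
- by rewrite XM !trmx_mul trmxK sF mulmxA.
Qed.

Lemma mp_exists m k (M : 'M[R]_(m, k)) : exists X, is_mpinv M X.
Proof.
set C := col_base M; set F := row_base M.
have eM : C *m F = M by rewrite mulmx_base.
have fF : row_free F by exact: row_base_free.
have fC : row_free C^T.
  rewrite /row_free mxrank_tr eqn_leq rank_leq_col /=.
  by have := mxrankM_maxl C F; rewrite eM.
have uF := unit_gram _ _ _ fF.
have uC := unit_gram _ _ _ fC; rewrite trmxK in uC.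
by have := mp_factor _ _ _ _ _ uC uF; rewrite eM.
Qed.

Lemma mpinv_spec m k (M : 'M[R]_(m, k)) : is_mpinv M (mpinv M).
Proof. rewrite /mpinv; apply: epsilon_spec; exact: mp_exists. Qed.

End Aux.

Lemma zh1 (V : zmodType) (a b c d : V) : a - b - (c - d) = a - c - b + d.
Proof.
by rewrite opprB addrA (addrAC a (-b) d) addrAC [RHS]addrAC (addrAC a (-c) d).
Qed.
Lemma zh0 (V : zmodType) (x y s w z : V) :
  x + (y - s + w) + (z - (x + w) - y) = z - s.
Proof.
rewrite opprD !addrA -!addrA.
rewrite (addrCA z (-x)) (addrCA w (-x)) (addrCA (-s) (-x)) (addrCA y (-x)) addNKr.
rewrite (addrC (-w) (-y)) (addrCA z (-y)) (addrCA w (-y)) (addrCA (-s) (-y)) addNKr.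
by rewrite (addrC z (-w)) addNKr addrC.
Qed.

Lemma zh2 (R : ringType) (V : lmodType R) (x y p w z : V) (rho dk : R) :
  x + rho *: (y - dk *: p + w) + (z - (x + rho *: w) - rho *: y) = z - (rho * dk) *: p.
Proof. by rewrite scalerDr scalerBr scalerA zh0. Qed.

Lemma key (R : realFieldType) n k (A : 'M[R]_n) (Q U W : 'M[R]_(n,k)) (X C : 'M[R]_k)
  (e : 'cV[R]_k) (q qp : 'cV[R]_n) (rho dk : R) :
  A *m Q = U + rho *: W -> W = Q *m C -> qp = Q *m e ->
  Q *m X *m (Q^T *m Q) = Q -> Q^T *m Q *m X *m Q^T = Q^T ->
  A *m q - (rho * dk) *: qp =
  U *m (X *m Q^T *m q)
  + rho *: (Q *m X *m ((U^T *m q - dk *: (Q^T *m qp))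
                      - (U^T *m Q - Q^T *m W) *m (X *m Q^T *m q)))
  + (A - rho *: (Q *m X *m Q^T *m A^T)) *m (1%:M - Q *m X *m Q^T) *m q.
Proof.
move=> hAQ hW hqp F1 F2.
set a := X *m Q^T *m q.
set r := q - Q *m a.
have PQ : Q *m X *m Q^T *m Q = Q by rewrite -mulmxA.
have Pqp : Q *m X *m Q^T *m qp = qp by rewrite hqp mulmxA PQ.
have PW : Q *m X *m Q^T *m W = W by rewrite hW mulmxA PQ.
have QtR : Q^T *m r = 0.
  by rewrite /r mulmxBr /a !mulmxA F2 subrr.
have Wr : W^T *m r = 0 by rewrite hW trmx_mul -mulmxA QtR mulmx0.
have Pq : Q *m X *m Q^T *m q = Q *m a by rewrite /a !mulmxA.
have AtP : Q *m X *m Q^T *m A^T = Q *m X *m U^T + rho *: (Q *m X *m W^T).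
  by rewrite -mulmxA -trmx_mul hAQ linearD /= linearZ /= mulmxDr scalemxAr.
have T3 : (A - rho *: (Q *m X *m Q^T *m A^T)) *m (1%:M - Q *m X *m Q^T) *m q
    = A *m q - (U *m a + rho *: (W *m a)) - rho *: (Q *m X *m U^T *m r).
  rewrite -mulmxA (mulmxBl 1%:M) mul1mx Pq -/r.
  rewrite mulmxBl -scalemxAl AtP mulmxDl -scalemxAl -(mulmxA _ W^T) Wr mulmx0 scaler0 addr0.
  by rewrite /r mulmxBr mulmxA hAQ mulmxDl -scalemxAl.
have T2 : Q *m X *m ((U^T *m q - dk *: (Q^T *m qp)) - (U^T *m Q - Q^T *m W) *m a)
    = Q *m X *m U^T *m r - dk *: qp + W *m a.
  rewrite mulmxBl !mulmxBr -scalemxAr !mulmxA Pqp PW.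
  by rewrite zh1.
by rewrite T2 T3 zh2.
Qed.

Section Main.
Variables (R : realFieldType) (n p : nat) (rho : R) (A : 'M[R]_n) (u0 : 'cV[R]_n)
  (B : 'M[R]_(n, p)) (h dh : nat -> R -> 'rV[R]_p -> R).

Local Notation u := (u_ rho A u0 B h dh).
Local Notation q := (q_ rho A u0 B h dh).
Local Notation qp := (qprev rho A u0 B h dh).
Local Notation d := (d_ rho A u0 B h dh).
Local Notation Q := (Qm rho A u0 B h dh).
Local Notation U := (Um rho A u0 B h dh).

Definition mat {m k} (f : 'I_k -> 'cV[R]_m) : 'M[R]_(m, k) := \matrix_(i < m, j < k) f j i 0.

Lemma mat_mulv m k (f : 'I_k -> 'cV[R]_m) (a : 'cV[R]_k) :
  mat f *m a = \sum_(j < k) a j 0 *: f j.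
Proof.
apply/matrixP => i z; rewrite !mxE summxE; apply: eq_bigr => j _.
by rewrite !mxE (ord1 z) mulrC.
Qed.

Lemma mulmx_mat m m' k (M : 'M[R]_(m', m)) (f : 'I_k -> 'cV[R]_m) :
  M *m mat f = mat (fun j => M *m f j).
Proof.
apply/matrixP => i j; rewrite !mxE; apply: eq_bigr => l _; by rewrite !mxE.
Qed.

Lemma mat_ext m k (f g : 'I_k -> 'cV[R]_m) : (forall j, f j = g j) -> mat f = mat g.
Proof. by move=> E; apply/matrixP => i j; rewrite !mxE E. Qed.

Lemma matB m k (f g : 'I_k -> 'cV[R]_m) : mat (fun j => f j - g j) = mat f - mat g.
Proof. by apply/matrixP => i j; rewrite !mxE. Qed.

Lemma matDZ m k (c : R) (f g : 'I_k -> 'cV[R]_m) :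
  mat (fun j => f j + c *: g j) = mat f + c *: mat g.
Proof. by apply/matrixP => i j; rewrite !mxE. Qed.

Lemma u_step k : u k.+1 = A *m q k - (rho * d k) *: qp k.
Proof. by case: k. Qed.

Definition ev k (j : nat) : 'cV[R]_k := \col_(i < k) ((i.+1 == j)%:R).

Lemma qp_span k j : (j <= k)%N -> qp j = Q k *m ev k j.
Proof.
move=> hj.
have -> : Q k = mat (fun i : 'I_k => q i) by [].
rewrite mat_mulv; case: j hj => [|j] hj.
  by rewrite big1 // => i _; rewrite mxE /= scale0r.
rewrite (bigD1 (Ordinal hj)) //= mxE eqxx scale1r big1 ?addr0 // => i hi.
rewrite mxE eqSS.
have -> : (i == j :> nat) = false.
  by apply/negbTE; apply: contra hi => /eqP hij; apply/eqP/val_inj.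
by rewrite scale0r.
Qed.

Lemma F1 k (QQ : 'M[R]_(n, k)) :
  QQ *m mpinv (QQ^T *m QQ) *m (QQ^T *m QQ) = QQ.
Proof.
set M := QQ^T *m QQ; set X := mpinv M.
have [h1 h2 h3 h4] := @mpinv_spec _ _ _ M.
set Y := 1%:M - X *m M.
have sY : Y^T = Y by rewrite /Y linearB /= trmx1 h4.
have MY : M *m Y = 0 by rewrite /Y mulmxBr mulmx1 mulmxA h1 subrr.
have : QQ *m Y = 0.
  apply: gram0; rewrite trmx_mul -mulmxA (mulmxA QQ^T) -/M mulmxA.
  by rewrite -(mulmxA Y^T) MY mulmx0.
by rewrite /Y mulmxBr mulmx1 mulmxA => /subr0_eq.
Qed.

Lemma F2 k (QQ : 'M[R]_(n, k)) :
  QQ^T *m QQ *m mpinv (QQ^T *m QQ) *m QQ^T = QQ^T.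
Proof.
set M := QQ^T *m QQ; set X := mpinv M.
have [h1 h2 h3 h4] := @mpinv_spec _ _ _ M.
set Z := 1%:M - M *m X.
have sZ : Z^T = Z by rewrite /Z linearB /= trmx1 h3.
have ZM : Z *m M = 0 by rewrite /Z mulmxBl mul1mx h1 subrr.
have : QQ *m Z = 0.
  apply: gram0; rewrite trmx_mul -mulmxA (mulmxA QQ^T) -/M mulmxA sZ.
  by rewrite ZM mul0mx.
rewrite /Z mulmxBr mulmx1 => /subr0_eq E.
have E' := congr1 trmx E; rewrite trmx_mul h3 in E'.
by rewrite -E'.
Qed.

Lemma part3 k :
  u k.+1 =
      \sum_(l < k) (alpha rho A u0 B h dh k) l 0 *: u l.+1
      + rho *: (Qm rho A u0 B h dh k
                *m mpinv ((Qm rho A u0 B h dh k)^T *m Qm rho A u0 B h dh k)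
                *m (vkl rho A u0 B h dh k k
                    - \sum_(l < k) (alpha rho A u0 B h dh k) l 0 *: vkl rho A u0 B h dh k l))
      + Ik rho A u0 B h dh k A.
Proof.
set W := mat (fun l : 'I_k => d l *: qp l).
have hsum1 : \sum_(l < k) (alpha rho A u0 B h dh k) l 0 *: u l.+1
    = U k *m alpha rho A u0 B h dh k.
  by have -> : U k = mat (fun l : 'I_k => u l.+1) by []; rewrite mat_mulv.
have hsum2 : \sum_(l < k) (alpha rho A u0 B h dh k) l 0 *: vkl rho A u0 B h dh k l
    = ((U k)^T *m Q k - (Q k)^T *m W) *m alpha rho A u0 B h dh k.
  rewrite -(@mat_mulv _ _ (fun l : 'I_k => vkl rho A u0 B h dh k l)); congr (_ *m _).
  rewrite (@mat_ext _ _ _ (fun l => (U k)^T *m q l - (Q k)^T *m (d l *: qp l))).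
    by rewrite matB -!mulmx_mat.
  by move=> l; rewrite /vkl scalemxAr.
have hAQ : A *m Q k = U k + rho *: W.
  have -> : Q k = mat (fun i : 'I_k => q i) by [].
  rewrite mulmx_mat -matDZ; apply: mat_ext => j.
  by rewrite u_step scalerA subrK.
set C := mat (fun j : 'I_k => d j *: ev k j).
have hW : W = Q k *m C.
  rewrite /C mulmx_mat; apply: mat_ext => j.
  by rewrite -scalemxAr -qp_span // ltnW.
have hqp : qp k = Q k *m ev k k by rewrite -qp_span.
rewrite u_step hsum1 hsum2 /Ik /Pperp /Pm /alpha /vkl.
eapply key; [exact: hAQ | exact: hW | exact: hqp | exact: F1 | exact: F2].
Qed.

End Main.

Theorem proposition4 (R : realFieldType) (n p : nat) (rho : R)
  (hrho : -1 <= rho <= 1) (A : 'M[R]_n) (u0 : 'cV[R]_n) (B : 'M[R]_(n, p))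
  (h dh : nat -> R -> 'rV[R]_p -> R) :
  let u := u_ rho A u0 B h dh in
  let q := q_ rho A u0 B h dh in
  u 1 = A *m q 0 /\ A *m q 0 = Ik rho A u0 B h dh 0 A /\
  forall k : nat, (1 <= k)%N ->
    u k.+1 =
      \sum_(l < k) (alpha rho A u0 B h dh k) l 0 *: u l.+1
      + rho *: (Qm rho A u0 B h dh k
                *m mpinv ((Qm rho A u0 B h dh k)^T *m Qm rho A u0 B h dh k)
                *m (vkl rho A u0 B h dh k k
                    - \sum_(l < k) (alpha rho A u0 B h dh k) l 0 *: vkl rho A u0 B h dh k l))
      + Ik rho A u0 B h dh k A.
Proof.
move=> u q; rewrite /u /q.
split; first by rewrite u_step /= mulr0 scale0r subr0.
split; last by move=> k _; exact: part3.
rewrite /Ik /Pperp /Pm.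
have -> : Qm rho A u0 B h dh 0 = 0 by apply/matrixP => i [].
by rewrite !(mul0mx, mulmx0, trmx0, scaler0, subr0, mulmx1).
Qed.
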